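(* Let $\mathbf L=\{L_1,\dots,L_n\}$ be a finite multiset of positive rationals, $k\in\mathbb N_{>0}$, and suppose $L_{co}\ne l^\star$. Let $\Sigma=\sum_{i\in I_{co}}L_i$, $$\underline l=\max\Bigl\{L_{co},\ \frac{\Sigma}{k+|I_{co}|}\Bigr\},\qquad \overline l=\frac{\Sigma}{k}.$$ Then $\bigl(I_{co},\ i\mapsto\lceil L_i/\overline l\rceil,\ i\mapsto\lceil L_i/\underline l\rceil\bigr)$ is an admissible restriction.
   Context: $m(l)=\sum_{i=1}^n\lfloor L_i/l\rfloor$, $c(l)=\sum_i(\lceil L_i/l\rceil-1)$; $l$ feasible iff $m(l)\ge k$; $l^\star$ is the unique optimal cut length (feasible length minimizing $c$ among feasible lengths; equals the largest feasible length). $L^{(k)}$ is the $k$-th largest element of $\mathbf L$ with multiplicity; $L_{co}=L^{(k)}$ if $k\le n$, $L_{co}=0$ if $k>n$; $I_{co}=\{i: L_i>L_{co}\}$. A triple $(I,f_l,f_u)$ with $I\subseteq[1..n]$, $f_l,f_u:I\to\mathbb N_{>0}$ is an admissible restriction if (i) for all $i\in I$, $f_l(i)=1$ or $L_i/(f_l(i)-1)$ is infeasible; (ii) for all $i\in I$, $L_i/f_u(i)$ is feasible; (iii) for all $i'\notin I$, $L_{i'}$ is feasible and $L_{i'}\ne l^\star$. *)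

(* Defs.v *)
From HB Require Import structures.
From mathcomp Require Import all_boot all_order all_algebra.
Set Implicit Arguments. Unset Strict Implicit. Unset Printing Implicit Defensive.
Import Order.TTheory GRing.Theory Num.Theory.
Local Open Scope ring_scope.

Section CutDefs.
Variables (n : nat) (L : 'I_n -> rat) (k : nat).

Definition mcount (l : rat) : int := \sum_(i < n) Num.floor (L i / l).

Definition ccost (l : rat) : int := \sum_(i < n) (Num.ceil (L i / l) - 1).

Definition feasible (l : rat) : Prop := 0 < l /\ (k%:Z <= mcount l).

Definition optimal (l : rat) : Prop :=
  feasible l /\ forall l', feasible l' -> ccost l <= ccost l'.

(* L^(k): k-th largest element of L with multiplicity; L_co *)
Definition Lsorted : seq rat := sort (fun x y : rat => y <= x) [seq L i | i <- enum 'I_n].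
Definition Lco : rat := if (k <= n)%N then nth 0 Lsorted k.-1 else 0.

Definition Ico : {set 'I_n} := [set i | Lco < L i].

(* admissible restriction (I, f_l, f_u), with f_l, f_u : I -> N_{>0}
   represented as int-valued functions required to be positive on I. *)
Definition admissible (lstar : rat) (I : {set 'I_n}) (fl fu : 'I_n -> int) : Prop :=
  (forall i, i \in I -> 0 < fl i /\ 0 < fu i) /\
  (forall i, i \in I -> fl i = 1 \/ ~ feasible (L i / (fl i - 1)%:~R)) /\
  (forall i, i \in I -> feasible (L i / (fu i)%:~R)) /\
  (forall i, i \notin I -> feasible (L i) /\ L i <> lstar).

End CutDefs.

(* Main.v *)
Set Warnings "-notation-overridden,-ambiguous-paths".
Require Import Defs.
From HB Require Import structures.
From mathcomp Require Import all_boot all_order all_algebra.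
Import Order.TTheory GRing.Theory Num.Theory.
Local Open Scope ring_scope.

Section Aux.
Variables (n : nat) (L : 'I_n -> rat) (k : nat).
Hypothesis Lpos : forall i, 0 < L i.
Hypothesis kpos : (0 < k)%N.

Lemma div_anti (x l l' : rat) : 0 <= x -> 0 < l -> l <= l' -> x / l' <= x / l.
Proof.
move=> x0 l0 ll'; apply: ler_wpM2l => //.
by rewrite lef_pV2 // posrE (lt_le_trans l0).
Qed.

Lemma div_santi (x l l' : rat) : 0 < x -> 0 < l -> l < l' -> x / l' < x / l.
Proof.
move=> x0 l0 ll'; rewrite ltr_pM2l //.
by rewrite ltf_pV2 // posrE (lt_trans l0).
Qed.

Lemma mcount_anti l l' : 0 < l -> l <= l' -> mcount L l' <= mcount L l.
Proof.
move=> l0 ll'; apply: ler_sum => i _; apply: le_floor.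
exact: div_anti (ltW (Lpos i)) l0 ll'.
Qed.

Lemma ccost_anti l l' : 0 < l -> l <= l' -> ccost L l' <= ccost L l.
Proof.
move=> l0 ll'; apply: ler_sum => i _; rewrite lerD2r; apply: le_ceil.
exact: div_anti (ltW (Lpos i)) l0 ll'.
Qed.

Lemma feas_down l l' : feasible L k l' -> 0 < l -> l <= l' -> feasible L k l.
Proof.
move=> [l0' ml] l0 ll'; split => //; apply: le_trans ml _.
exact: mcount_anti.
Qed.

Lemma exists_min (I : finType) (P : pred I) (F : I -> rat) i0 :
  P i0 -> exists2 i, P i & forall j, P j -> F i <= F j.
Proof.
move=> Pi0; case: (@arg_minP _ _ I i0 P F Pi0) => i Pi H; by exists i.
Qed.

Lemma max_feasible lstar l' : optimal L k lstar -> feasible L k l' -> l' <= lstar.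
Proof.
move=> [[ls0 mls] Hopt] [l0 ml].
pose f i := Num.floor (L i / l').
have [i1 Hi1] : exists i, 0 < f i.
  case: (pickP (fun i => 0 < f i)) => [i Hi|H]; first by exists i.
  exfalso; have : mcount L l' <= 0.
    by apply: sumr_le0 => i _; move: (H i) => /= /negbT; rewrite -leNgt.
  by move=> /(le_trans ml); rewrite lez_nat leqn0 => /eqP k0; move: kpos; rewrite k0.
have [i0 Pi0 Hmin] := @exists_min _ (fun i => 0 < f i) (fun i => L i / (f i)%:~R) i1 Hi1.
set l'' := L i0 / (f i0)%:~R.
have fi0 : 0 < ((f i0)%:~R : rat) by rewrite ltr0z.
have l''0 : 0 < l'' by rewrite divr_gt0.
have l'l'' : l' <= l''.
  rewrite /l'' ler_pdivlMr // mulrC -ler_pdivlMr //; exact: floor_le.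
have fle : forall i, f i <= Num.floor (L i / l'').
  move=> i; case: (ltrP 0 (f i)) => fi.
    rewrite floor_ge_int ler_pdivlMr // mulrC -ler_pdivlMr ?ltr0z //.
    exact: Hmin.
  by apply: le_trans fi _; rewrite floor_ge0 divr_ge0 // ltW.
have feas'' : feasible L k l''.
  split => //; apply: le_trans ml _; apply: ler_sum => i _; exact: fle.
apply: le_trans l'l'' _; rewrite leNgt; apply/negP => lt.
have := Hopt l'' feas''; apply/negP; rewrite -ltNge.
rewrite /ccost (bigD1 i0) //= [X in _ < X](bigD1 i0) //=.
apply: ltr_leD.
  rewrite ltrD2r.
  have -> : L i0 / l'' = (f i0)%:~R by rewrite /l'' invf_div mulrA mulrC mulrA mulVf ?mul1r // gt_eqF.
  rewrite intrKceil ceil_gt_int.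
  have <- : L i0 / l'' = (f i0)%:~R by rewrite /l'' invf_div mulrA mulrC mulrA mulVf ?mul1r // gt_eqF.
  exact: div_santi.
apply: ler_sum => i _; rewrite lerD2r; apply: le_ceil.
exact: div_anti (ltW (Lpos i)) ls0 (ltW lt).
Qed.


Lemma count_enum_card m (a : pred 'I_m) : count a (enum 'I_m) = #|a|.
Proof. by rewrite cardE /enum_mem size_filter count_filter; apply: eq_count => x; rewrite /= andbT. Qed.

Lemma Lsorted_props : size (Lsorted L) = n /\ sorted (fun x y : rat => y <= x) (Lsorted L).
Proof.
split; first by rewrite /Lsorted size_sort size_map size_enum_ord.
apply: sort_sorted => x y; exact: le_total.
Qed.

Lemma Lco_in (kn : (k <= n)%N) : exists i, Lco L k = L i.
Proof.
have [sz _] := Lsorted_props.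
have : Lco L k \in Lsorted L.
  rewrite /Lco kn; apply: mem_nth; rewrite sz; by case: k kpos kn.
rewrite mem_sort => /mapP [i _ ->]; by exists i.
Qed.

Lemma Lco_count (kn : (k <= n)%N) : (k <= #|[pred i | (Lco L k <= L i)%R]|)%N.
Proof.
have [sz so] := Lsorted_props.
set s := Lsorted L.
have Hc : (k <= count (fun x => (Lco L k <= x)%R) s)%N.
  rewrite -[s](cat_take_drop k) count_cat.
  apply: leq_trans (leq_addr _ _).
  have : all (fun x => Lco L k <= x) (take k s).
    apply/allP => x /(nthP 0) [j hj <-].
    rewrite size_takel ?sz // in hj.
    rewrite nth_take // /Lco kn.
    have := @sorted_leq_nth _ (fun x y : rat => y <= x) _ _ 0 s so.
    move=> /(_ (fun a b c hab hbc => le_trans hbc hab) (fun a => le_refl a)) H.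
    apply: H; rewrite ?inE /s ?sz.
    - exact: leq_trans hj kn.
    - by case: k kpos kn.
    - by case: k kpos kn hj.
  by rewrite all_count => /eqP ->; rewrite size_takel ?sz.
apply: leq_trans Hc _.
have := perm_sort (fun x y : rat => y <= x) [seq L i | i <- enum 'I_n].
move=> /permPl /permP ->.
by rewrite count_map count_enum_card.
Qed.


Lemma Lco_feas (kn : (k <= n)%N) : feasible L k (Lco L k).
Proof.
have [i0 Hi0] := Lco_in kn.
have c0 : 0 < Lco L k by rewrite Hi0.
split => //.
set P := [pred i | (Lco L k <= L i)%R].
apply: (@le_trans _ _ (#|P|%:Z)); first by rewrite lez_nat; exact: Lco_count.
have -> : (#|P|%:Z) = \sum_(i in P) (1:int) by rewrite sumr_const natz.
rewrite /mcount [X in _ <= X](bigID (mem P)) /= -[X in X <= _]addr0.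
apply: lerD.
  apply: ler_sum => i Pi; rewrite floor_ge_int ler_pdivlMr // mul1r; exact: Pi.
apply: sumr_ge0 => i _; rewrite floor_ge0 divr_ge0 // ltW //.
Qed.

Lemma notin_Ico i : i \notin Ico L k -> L i <= Lco L k.
Proof. by rewrite inE -leNgt. Qed.

Lemma Lco_lt lstar : optimal L k lstar -> Lco L k <> lstar -> Lco L k < lstar.
Proof.
move=> Hopt Hne; case kn: (k <= n)%N.
  rewrite lt_neqAle (@max_feasible _ _ Hopt (Lco_feas kn)) andbT; exact/eqP.
by rewrite /Lco kn; case: Hopt => [[]].
Qed.

Lemma lstar_le lstar : optimal L k lstar -> Lco L k < lstar ->
  lstar * k%:R <= \sum_(i in Ico L k) L i.
Proof.
move=> [[ls0 mls] _] clt.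
rewrite -ler_pdivlMl //.
have : (k%:R : rat) <= (mcount L lstar)%:~R by rewrite -(ler_int rat) in mls.
move=> /le_trans; apply.
rewrite /mcount rmorph_sum /= mulr_sumr [X in _ <= X]big_mkcond /=.
apply: ler_sum => i _; case: ifP => Hi.
  by rewrite mulrC; exact: floor_le.
rewrite lerz0 floor_le0 ltr_pdivrMr // mul1r.
apply: le_lt_trans clt; apply: notin_Ico; by rewrite Hi.
Qed.


Lemma l0_feas i : i \in Ico L k ->
  feasible L k ((\sum_(j in Ico L k) L j) / (k + #|Ico L k|)%:R).
Proof.
move=> Hi.
set S := \sum_(j in Ico L k) L j.
have S0 : 0 < S.
  rewrite /S (bigD1 i) //=; apply: (lt_le_trans (Lpos i)).
  rewrite lerDl; apply: sumr_ge0 => j _; exact: ltW.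
set c := (k + #|Ico L k|)%:R : rat.
have c0 : 0 < c by rewrite /c ltr0n addn_gt0 kpos.
have l00 : 0 < S / c by rewrite divr_gt0.
split => //.
rewrite -(ler_int rat) /mcount rmorph_sum /=.
apply: (@le_trans _ _ (\sum_(j in Ico L k) (L j / (S / c) - 1))).
  rewrite big_split /= -mulr_suml sumrN sumr_const -/S.
  have -> : S / (S / c) = c by rewrite invf_div mulrCA divff ?mulr1 // gt_eqF.
  by rewrite /c natrD addrK.
rewrite [X in _ <= X](bigID (mem (Ico L k))) /= -[X in X <= _]addr0.
apply: lerD.
  apply: ler_sum => j _; apply: ltW; rewrite ltrBlDr -[1]/(1%:~R) -intrD.
  exact: floorD1_gt.
apply: sumr_ge0 => j _; rewrite ler0z floor_ge0 divr_ge0 // ltW //.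
Qed.

End Aux.

Theorem mainTheorem12 (n : nat) (L : 'I_n -> rat) (k : nat)
  (Lpos : forall i, 0 < L i) (kpos : (0 < k)%N)
  (lstar : rat) (Hopt : optimal L k lstar)
  (Hco : Lco L k <> lstar) :
  let Sigma := \sum_(i in Ico L k) L i in
  let lunder := Num.max (Lco L k) (Sigma / (k + #|Ico L k|)%:R) in
  let lover := Sigma / k%:R in
  admissible L k lstar (Ico L k)
    (fun i => Num.ceil (L i / lover)) (fun i => Num.ceil (L i / lunder)).
Proof.
move=> Sigma lunder lover.
have lsl := @Lco_lt _ _ _ Lpos kpos _ Hopt Hco.
have ls0 : 0 < lstar by case: Hopt => [[]].
have kr0 : 0 < (k%:R : rat) by rewrite ltr0n.
have Sig0 : forall i, i \in Ico L k -> 0 < Sigma.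
  move=> i Hi; rewrite /Sigma (bigD1 i) //=; apply: (lt_le_trans (Lpos i)).
  rewrite lerDl; apply: sumr_ge0 => j _; exact: ltW.
have lover0 : forall i, i \in Ico L k -> 0 < lover.
  by move=> i Hi; rewrite /lover divr_gt0 // (Sig0 i Hi).
have l0feas := @l0_feas _ _ _ Lpos kpos.
have lunder0 : forall i, i \in Ico L k -> 0 < lunder.
  move=> i Hi; apply: (@lt_le_trans _ _ (Sigma / (k + #|Ico L k|)%:R)).
    by case: (l0feas i Hi).
  by rewrite /lunder le_max lexx orbT.
have lsover : lstar <= lover.
  by rewrite /lover ler_pdivlMr //; exact: lstar_le.
split; [|split; [|split]].
- move=> i Hi; split; rewrite ceil_gt0 divr_gt0 //; [exact: lover0 Hi | exact: lunder0 Hi].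
- move=> i Hi; set f := Num.ceil (L i / lover).
  have f0 : 0 < f by rewrite /f ceil_gt0 divr_gt0 // (lover0 i Hi).
  case: (eqVneq f 1) => [->|fn1]; first by left.
  right => Hf.
  have f10 : 0 < ((f - 1)%:~R : rat).
    by rewrite ltr0z subr_gt0 lt_neqAle eq_sym fn1 /=.
  have := @max_feasible _ _ _ Lpos kpos _ _ Hopt Hf.
  apply/negP; rewrite -ltNge; apply: le_lt_trans lsover _.
  rewrite ltr_pdivlMr // mulrC -ltr_pdivlMr ?(lover0 i Hi) //.
  exact: ceilB1_lt.
- move=> i Hi; set g := Num.ceil (L i / lunder).
  have lu0 := lunder0 i Hi.
  have g0 : 0 < ((g)%:~R : rat) by rewrite ltr0z /g ceil_gt0 divr_gt0.
  apply: (@feas_down _ _ _ Lpos _ lstar); first by case: Hopt.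
    by rewrite divr_gt0.
  apply: (@le_trans _ _ lunder).
    rewrite ler_pdivrMr // mulrC -ler_pdivrMr //; exact: ceil_ge.
  rewrite /lunder ge_max (ltW lsl) /=.
  exact: (@max_feasible _ _ _ Lpos kpos _ _ Hopt (l0feas i Hi)).
- move=> i Hi.
  case kn: (k <= n)%N; last first.
    exfalso; move: Hi; rewrite inE /Lco kn -leNgt; apply/negP; rewrite -ltNge; exact: Lpos.
  have Hle := @notin_Ico _ _ _ _ Hi.
  split.
    apply: (@feas_down _ _ _ Lpos _ (Lco L k)) => //; exact: (@Lco_feas _ _ _ Lpos kpos kn).
  by move=> E; move: lsl; rewrite -E ltNge Hle.
Qed.
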